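(* Let $\alpha\in(0,1]$, let $\mathbb X$ be a finite-dimensional real Hilbert space, and let $\mathfrak D\subseteq\mathbb X$ be a closed convex set that is $C^{1,\alpha}$-cone reducible at $\hat x\in\mathfrak D$. Let $\hat y\in\mathcal N_{\mathfrak D}(\hat x)$. Then there exist $\hat\rho>0$, $\hat\delta>0$ and $\hat\kappa>0$ such that $$\mathcal N_{\mathfrak D}(x)\cap B(\hat y,\hat\delta)\subseteq\mathcal N_{\mathfrak D}(\hat x)+\hat\kappa\|x-\hat x\|^\alpha B(0,1)\quad\text{for all }x\in B(\hat x,\hat\rho).$$
   Context: $B(x,\eta):=\{u:\|u-x\|\le\eta\}$. For a closed convex set $\mathfrak D$, $\mathcal N_{\mathfrak D}(x):=\{v:\langle v,u-x\rangle\le0\ \forall u\in\mathfrak D\}$ if $x\in\mathfrak D$ (and $\emptyset$ otherwise). Definition ($C^{1,\alpha}$-cone reducibility): for $\alpha\in(0,1]$, a closed set $\mathfrak D\subseteq\mathbb X$ is $C^{1,\alpha}$-cone reducible at $\hat x\in\mathfrak D$ if there exist $\rho>0$, a closed convex pointed cone $K$ in a finite-dimensional Hilbert space $\mathbb Y$, and a mapping $\Xi:\mathbb X\to\mathbb Y$ with $\Xi(\hat x)=0$ that is continuously differentiable on $B(\hat x,\rho)$, such that the derivative $D\Xi(\hat x)$ is surjective, the mapping $x\mapsto D\Xi(x)$ is $\alpha$-Hölder continuous on $B(\hat x,\rho)$, and $\mathfrak D\cap B(\hat x,\rho)=\{x:\Xi(x)\in K\}\cap B(\hat x,\rho)$.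 $\mathfrak D$ is $C^{1,\alpha}$-cone reducible if it is so at every point of $\mathfrak D$. *)

(* Defs.v *)
From HB Require Import structures.
From mathcomp Require Import all_boot all_order all_algebra.
From mathcomp Require Import all_classical all_reals all_analysis.
Set Implicit Arguments. Unset Strict Implicit. Unset Printing Implicit Defensive.
Import Order.TTheory GRing.Theory Num.Theory.
Import numFieldNormedType.Exports.
Local Open Scope classical_set_scope.
Local Open Scope ring_scope.

Section Defs.
Variable R : realType.

Definition dotv {n : nat} (u v : 'rV[R]_n) : R := (u *m v^T) 0 0.
Definition enorm {n : nat} (u : 'rV[R]_n) : R := Num.sqrt (dotv u u).

Definition eball {n : nat} (x : 'rV[R]_n) (eta : R) : set 'rV[R]_n :=
  [set u | enorm (u - x) <= eta].

Definition closed_convex_pointed_cone {m : nat} (K : set 'rV[R]_m) : Prop :=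
  closed K /\ convex_set (K : set 'rV[R]_m) /\ K 0 /\
  (forall t u, 0 <= t -> K u -> K (t *: u)) /\
  (forall u, K u -> K (- u) -> u = 0).

(* normal cone of a convex set: empty outside D *)
Definition normal_cone {n : nat} (D : set 'rV[R]_n) (x : 'rV[R]_n) : set 'rV[R]_n :=
  [set v | D x /\ forall u, D u -> dotv v (u - x) <= 0].

(* Xi has Frechet derivative DXi x at x (derivative acting on row vectors
   as h |-> h *m DXi x) *)
Definition has_deriv_at {n m : nat} (Xi : 'rV[R]_n -> 'rV[R]_m)
  (A : 'M[R]_(n, m)) (x : 'rV[R]_n) : Prop :=
  forall eps : R, 0 < eps -> exists d : R, 0 < d /\
    forall h : 'rV[R]_n, enorm h < d ->
      enorm (Xi (x + h) - Xi x - h *m A) <= eps * enorm h.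

Definition C1alpha_cone_reducible_at {n : nat} (alpha : R)
  (D : set 'rV[R]_n) (xh : 'rV[R]_n) : Prop :=
  exists (rho : R) (m : nat) (K : set 'rV[R]_m)
         (Xi : 'rV[R]_n -> 'rV[R]_m) (DXi : 'rV[R]_n -> 'M[R]_(n, m)),
    0 < rho /\ closed_convex_pointed_cone K /\ Xi xh = 0 /\
    (forall x, eball xh rho x -> has_deriv_at Xi (DXi x) x) /\
    {within eball xh rho, continuous DXi} /\
    (forall w : 'rV[R]_m, exists h : 'rV[R]_n, h *m DXi xh = w) /\
    (exists L : R, forall x y, eball xh rho x -> eball xh rho y ->
       forall h : 'rV[R]_n,
         enorm (h *m (DXi x - DXi y)) <= L * enorm (x - y) `^ alpha * enorm h) /\
    (D `&` eball xh rho = [set x | K (Xi x)] `&` eball xh rho).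

End Defs.

(* Main.v *)
Require Import Defs.
From HB Require Import structures.
From mathcomp Require Import all_boot all_order all_algebra.
From mathcomp Require Import all_classical all_reals all_analysis.
From mathcomp Require Import ring lra.
Import Order.TTheory GRing.Theory Num.Theory.
Import numFieldNormedType.Exports.
Local Open Scope classical_set_scope.
Local Open Scope ring_scope.



Section Eucl.
Context {R : realType}.
Implicit Types (a t : R).

Lemma dotvE {n} (u v : 'rV[R]_n) : dotv u v = \sum_j u 0 j * v 0 j.
Proof. by rewrite /dotv !mxE; apply: eq_bigr => j _; rewrite mxE. Qed.

Lemma dotvC {n} (u v : 'rV[R]_n) : dotv u v = dotv v u.
Proof. by rewrite !dotvE; apply: eq_bigr => j _; rewrite mulrC. Qed.

Lemma dotvDl {n} (u v w : 'rV[R]_n) : dotv (u + v) w = dotv u w + dotv v w.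
Proof. by rewrite !dotvE -big_split; apply: eq_bigr => j _; rewrite mxE mulrDl. Qed.

Lemma dotvZl {n} a (u w : 'rV[R]_n) : dotv (a *: u) w = a * dotv u w.
Proof. by rewrite !dotvE mulr_sumr; apply: eq_bigr => j _; rewrite mxE mulrA. Qed.

Lemma dotvNl {n} (u w : 'rV[R]_n) : dotv (- u) w = - dotv u w.
Proof. by rewrite -scaleN1r dotvZl mulN1r. Qed.

Lemma dotvBl {n} (u v w : 'rV[R]_n) : dotv (u - v) w = dotv u w - dotv v w.
Proof. by rewrite dotvDl dotvNl. Qed.

Lemma dotvDr {n} (u v w : 'rV[R]_n) : dotv w (u + v) = dotv w u + dotv w v.
Proof. by rewrite dotvC dotvDl !(dotvC w). Qed.

Lemma dotvZr {n} a (u w : 'rV[R]_n) : dotv w (a *: u) = a * dotv w u.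
Proof. by rewrite dotvC dotvZl dotvC. Qed.

Lemma dotvNr {n} (u w : 'rV[R]_n) : dotv w (- u) = - dotv w u.
Proof. by rewrite dotvC dotvNl dotvC. Qed.

Lemma dotvBr {n} (u v w : 'rV[R]_n) : dotv w (u - v) = dotv w u - dotv w v.
Proof. by rewrite dotvDr dotvNr. Qed.

Lemma dotv0l {n} (w : 'rV[R]_n) : dotv 0 w = 0.
Proof. by rewrite -(scale0r 0) dotvZl mul0r. Qed.

Lemma dotv0r {n} (w : 'rV[R]_n) : dotv w 0 = 0.
Proof. by rewrite dotvC dotv0l. Qed.

Lemma dotv_ge0 {n} (u : 'rV[R]_n) : 0 <= dotv u u.
Proof. by rewrite dotvE sumr_ge0 // => j _; rewrite -expr2 sqr_ge0. Qed.

Lemma dotv_eq0 {n} (u : 'rV[R]_n) : dotv u u = 0 -> u = 0.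
Proof.
rewrite dotvE => H; apply/rowP => j; rewrite mxE.
have := @psumr_eq0P _ _ predT (fun j => u 0 j * u 0 j).
move=> /(_ (fun j _ => ltac:(by rewrite -expr2 sqr_ge0)) H j isT).
by move/eqP; rewrite mulf_eq0 orbb => /eqP.
Qed.

Lemma dotv_mulmx {n} p (u : 'rV[R]_n) (N : 'M[R]_(n, p)) (v : 'rV[R]_p) :
  dotv (u *m N) v = dotv u (v *m N^T).
Proof. by rewrite /dotv trmx_mul trmxK mulmxA. Qed.

Lemma enorm_ge0 {n} (u : 'rV[R]_n) : 0 <= enorm u.
Proof. exact: sqrtr_ge0. Qed.

Lemma enorm_sq {n} (u : 'rV[R]_n) : enorm u ^+ 2 = dotv u u.
Proof. by rewrite /enorm sqr_sqrtr // dotv_ge0. Qed.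

Lemma enorm_eq0 {n} (u : 'rV[R]_n) : enorm u = 0 -> u = 0.
Proof. by move=> H; apply: (dotv_eq0 u); rewrite -enorm_sq H expr0n. Qed.

Lemma enorm0 {n} : enorm (0 : 'rV[R]_n) = 0.
Proof. by rewrite /enorm dotv0l sqrtr0. Qed.

Lemma enormZ {n} a (u : 'rV[R]_n) : enorm (a *: u) = `|a| * enorm u.
Proof.
by rewrite /enorm dotvZl dotvZr mulrA -expr2 sqrtrM ?sqr_ge0 // sqrtr_sqr.
Qed.

Lemma enormN {n} (u : 'rV[R]_n) : enorm (- u) = enorm u.
Proof. by rewrite -scaleN1r enormZ normrN normr1 mul1r. Qed.

Lemma enormB {n} (u v : 'rV[R]_n) : enorm (u - v) = enorm (v - u).
Proof. by rewrite -enormN opprB. Qed.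

Lemma cauchy_schwarz_sq {n} (u v : 'rV[R]_n) :
  dotv u v ^+ 2 <= dotv u u * dotv v v.
Proof.
have [v0|vn0] := eqVneq (dotv v v) 0.
  by rewrite (dotv_eq0 _ v0) dotv0r dotv0l expr0n mulr0.
have vp : 0 < dotv v v by rewrite lt_neqAle eq_sym vn0 dotv_ge0.
set t := dotv u v / dotv v v.
have := dotv_ge0 (u - t *: v).
rewrite !(dotvBl, dotvBr, dotvZl, dotvZr) (dotvC v u).
rewrite /t => H.
set a := dotv u u in H *; set b := dotv u v in H *; set c := dotv v v in H vp vn0 *.
have E : b / c * c = b by rewrite mulfVK.
rewrite E subrr mulr0 subr0 in H.
have := mulr_ge0 H (ltW vp).
rewrite mulrBl subr_ge0.
by have -> : b / c * b * c = b ^+ 2 by rewrite mulrAC E expr2.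
Qed.

Lemma dotv_norm_le {n} (u v : 'rV[R]_n) : `|dotv u v| <= enorm u * enorm v.
Proof.
rewrite -(@ler_pXn2r _ 2) ?nnegrE ?mulr_ge0 ?enorm_ge0 //.
by rewrite real_normK ?num_real // exprMn !enorm_sq cauchy_schwarz_sq.
Qed.

Lemma dotv_le {n} (u v : 'rV[R]_n) : dotv u v <= enorm u * enorm v.
Proof. exact: le_trans (real_ler_norm (num_real _)) (dotv_norm_le u v). Qed.

Lemma enormD {n} (u v : 'rV[R]_n) : enorm (u + v) <= enorm u + enorm v.
Proof.
rewrite -(@ler_pXn2r _ 2) ?nnegrE ?addr_ge0 ?enorm_ge0 //.
rewrite enorm_sq dotvDl !dotvDr sqrrD !enorm_sq (dotvC v u).
have := dotv_le u v; rewrite mulr2n; lra.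
Qed.

Lemma enormDB {n} (u v w : 'rV[R]_n) : enorm (u - w) <= enorm (u - v) + enorm (v - w).
Proof. by rewrite (_ : u - w = (u - v) + (v - w)) ?enormD // addrA subrK. Qed.

Lemma enorm_sum {n} (I : finType) (F : I -> 'rV[R]_n) :
  enorm (\sum_i F i) <= \sum_i enorm (F i).
Proof.
elim/big_ind2: _ => [|x1 x2 y1 y2 h1 h2|i _]; first by rewrite enorm0.
  exact: le_trans (enormD _ _) (lerD h1 h2).
done.
Qed.

Lemma entry_le {n} (u : 'rV[R]_n) j : `|u 0 j| <= enorm u.
Proof.
rewrite -(@ler_pXn2r _ 2) ?nnegrE ?enorm_ge0 // enorm_sq dotvE real_normK ?num_real //.
rewrite (bigD1 j) //= -expr2 lerDl sumr_ge0 // => i _; by rewrite -expr2 sqr_ge0.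
Qed.

Lemma enorm_delta {n} (j : 'I_n) : enorm (delta_mx 0 j : 'rV[R]_n) = 1.
Proof.
rewrite /enorm dotvE (bigD1 j) //= !mxE !eqxx mulr1 big1 ?addr0 ?sqrtr1 // => i /negbTE ij.
by rewrite !mxE ij mulr0.
Qed.

Lemma enorm_le_sum {n} (u : 'rV[R]_n) : enorm u <= \sum_j `|u 0 j|.
Proof.
rewrite {1}(row_sum_delta u); apply: le_trans; first exact: enorm_sum.
by apply: ler_sum => j _; rewrite enormZ enorm_delta mulr1.
Qed.

Lemma mxnormE {n} (u : 'rV[R]_n) : `|u| = mx_norm u.
Proof. by []. Qed.

Lemma mxnorm_le_enorm {n} (u : 'rV[R]_n) : `|u| <= enorm u.
Proof.
rewrite mxnormE mx_normrE; apply/bigmax_leP; split; first exact: enorm_ge0.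
by move=> [i j] _ /=; rewrite (ord1 i) entry_le.
Qed.

Lemma entry_le_mxnorm {n} (u : 'rV[R]_n) j : `|u 0 j| <= `|u|.
Proof.
rewrite mxnormE mx_normrE; apply/bigmax_geP; right; exists (0, j) => //.
Qed.

Lemma enorm_le_mxnorm {n} (u : 'rV[R]_n) : enorm u <= n%:R * `|u|.
Proof.
apply: le_trans (enorm_le_sum u) _.
have -> : (n%:R : R) = \sum_(j < n) 1 by rewrite sumr_const card_ord.
by rewrite mulr_suml; apply: ler_sum => j _; rewrite mul1r entry_le_mxnorm.
Qed.

Lemma opbound {p q} (N : 'M[R]_(p, q)) :
  exists c : R, 0 < c /\ forall v, enorm (v *m N) <= c * enorm v.
Proof.
exists (1 + \sum_i enorm (row i N)); split.
  by rewrite ltr_wpDr // sumr_ge0 // => i _; exact: enorm_ge0.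
move=> v; rewrite mulmx_sum_row; apply: le_trans; first exact: enorm_sum.
rewrite mulrDl mul1r; apply: ler_wpDl; first exact: enorm_ge0.
rewrite mulr_suml; apply: ler_sum => i _; rewrite enormZ mulrC.
by rewrite ler_wpM2l ?enorm_ge0 ?entry_le.
Qed.

Lemma enorm_le_of_dot {n} (v : 'rV[R]_n) C : 0 <= C ->
  (forall h, dotv v h <= C * enorm h) -> enorm v <= C.
Proof.
move=> C0 H; have := H v; rewrite -enorm_sq expr2.
have [->|vp] := eqVneq (enorm v) 0; first by [].
have vpos : 0 < enorm v by rewrite lt_neqAle eq_sym vp enorm_ge0.
by rewrite ler_pM2r.
Qed.

Lemma optrans {p q} (E : 'M[R]_(p, q)) c :
  0 <= c -> (forall k, enorm (k *m E) <= c * enorm k) ->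
  forall v, enorm (v *m E^T) <= c * enorm v.
Proof.
move=> c0 H v; apply: enorm_le_of_dot; first by rewrite mulr_ge0 ?enorm_ge0.
move=> h; rewrite dotv_mulmx trmxK; apply: le_trans; first exact: dotv_le.
by rewrite (mulrC c) -mulrA ler_wpM2l ?enorm_ge0.
Qed.

Lemma zmod_sw (V : zmodType) (X Y U W : V) : X - U - (Y - W) = X - Y - (U - W).
Proof. by rewrite !opprB addrACA [in RHS]addrACA (addrC (-U)). Qed.

End Eucl.



Section MVI.
Context {R : realType}.

Lemma dini1d (f : R -> R) (K : R) :
  (forall t, 0 <= t -> t <= 1 -> forall e, 0 < e -> exists2 d, 0 < d &
     forall s, 0 <= s -> s <= 1 -> `|s - t| < d -> `|f s - f t| <= (K + e) * `|s - t|) ->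
  f 0 = 0 -> f 1 <= K.
Proof.
move=> H f0; apply/ler_addgt0Pr => e e0.
pose A := [set t : R | 0 <= t /\ t <= 1 /\ f t <= (K + e) * t].
have A0 : A 0 by rewrite /A /= lexx ler01 f0 mulr0.
have ubA : ubound A 1 by move=> t [_ []].
have hsA : has_sup A by split; [exists 0 | exists 1].
set T := sup A.
have T0 : 0 <= T by exact: (sup_upper_bound hsA A0).
have T1 : T <= 1 by exact: (sup_le_ub (ex_intro _ 0 A0) ubA).
have [d d0 Hd] := H T T0 T1 e e0.
have AT : A T.
  have [t At tT] := sup_adherent d0 hsA.
  have tleT : t <= T by exact: (sup_upper_bound hsA At).
  case: At => t0 [t1 ft].
  have tTd : `|t - T| < d by rewrite ler0_norm ?subr_le0 //; rewrite -/T in tT; lra.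
  have Hft := Hd t t0 t1 tTd.
  have E1 : `|t - T| = T - t by rewrite distrC ger0_norm ?subr_ge0.
  rewrite E1 mulrBr in Hft.
  have Hn : f T - f t <= `|f t - f T| by rewrite distrC ler_norm.
  split; [done|split; [done|]]; lra.
have [T1'|] := eqVneq T 1.
  by case: AT => _ [_]; rewrite T1' mulr1.
move=> Tn1; have Tlt1 : T < 1 by rewrite lt_neqAle Tn1 T1.
pose s := Num.min 1 (T + d / 2).
have sT : T < s by rewrite /s lt_min Tlt1 /=; lra.
have s1 : s <= 1 by rewrite /s ge_min lexx.
have sd : s <= T + d / 2 by rewrite /s ge_min lexx orbT.
have As : A s.
  have E2 : `|s - T| = s - T by rewrite gtr0_norm ?subr_gt0.
  have sTd : `|s - T| < d by rewrite E2; lra.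
  have Hfs := Hd s ltac:(lra) s1 sTd.
  rewrite E2 mulrBr in Hfs.
  have Hn : f s - f T <= `|f s - f T| by rewrite ler_norm.
  case: AT => _ [_ fT].
  split; [lra|split; [done|]]; lra.
have : s <= T by exact: (sup_upper_bound hsA As).
lra.
Qed.

Lemma enorm_rev {n} (x y : 'rV[R]_n) : `|enorm x - enorm y| <= enorm (x - y).
Proof.
have h1 := enormDB x y 0; have h2 := enormDB y x 0.
rewrite !subr0 in h1 h2; rewrite enormB in h2.
by rewrite ler_norml; apply/andP; split; lra.
Qed.

Lemma mvi {n m} (Xi : 'rV[R]_n -> 'rV[R]_m) (J : 'rV[R]_n -> 'M[R]_(n,m))
  (A : 'M[R]_(n,m)) (S : set 'rV[R]_n) (eta : R) (a b : 'rV[R]_n) :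
  (forall t, 0 <= t -> t <= 1 -> S (b + t *: (a - b))) ->
  (forall z, S z -> has_deriv_at Xi (J z) z) ->
  (forall z h, S z -> enorm (h *m (J z - A)) <= eta * enorm h) ->
  enorm (Xi a - Xi b - (a - b) *m A) <= eta * enorm (a - b).
Proof.
move=> Sseg Hd HJ.
set D := a - b.
pose g t := Xi (b + t *: D) - t *: (D *m A).
pose f t := enorm (g t - g 0).
have f0 : f 0 = 0 by rewrite /f subrr enorm0.
have f1 : f 1 = enorm (Xi a - Xi b - D *m A).
  rewrite /f /g !scale1r !scale0r addr0 subr0 /D (addrC b) subrK.
  by rewrite addrAC.
rewrite -f1; apply: (@dini1d f) f0 => t t0 t1 e e0.
have Dp : 0 < enorm D + 1 by rewrite ltr_wpDl ?enorm_ge0.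
have [d' [d'0 Hd']] := Hd _ (Sseg t t0 t1) (e / (enorm D + 1)) ltac:(by rewrite divr_gt0).
exists (d' / (enorm D + 1)); first by rewrite divr_gt0.
move=> s s0 s1 st.
set c := b + t *: D; set h := (s - t) *: D.
have hn : enorm h = `|s - t| * enorm D by rewrite /h enormZ.
have hlt : enorm h < d'.
  rewrite hn; apply: (le_lt_trans (y := d' / (enorm D + 1) * enorm D)).
    by rewrite ler_wpM2r ?enorm_ge0 // ltW.
  rewrite mulrAC ltr_pdivrMr // ltr_pM2l //; lra.
have Hc := Hd' h hlt.
have ch : c + h = b + s *: D by rewrite /c /h -addrA -scalerDl (addrC t) subrK.
have eqg : g s - g t = (Xi (c + h) - Xi c - h *m J c) + h *m (J c - A).
  rewrite mulmxBr addrA subrK /g -ch -/c zmod_sw; congr (_ - _).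
  by rewrite /h -scalemxAl scalerBl.
have fst : `|f s - f t| <= enorm (g s - g t).
  apply: le_trans; first exact: enorm_rev.
  by rewrite (_ : g s - g 0 - (g t - g 0) = g s - g t) // zmod_sw subrr subr0.
apply: (le_trans fst); rewrite eqg; apply: le_trans; first exact: enormD.
apply: le_trans; first exact: (lerD Hc (HJ c h (Sseg t t0 t1))).
rewrite -mulrDl hn mulrA [_ * `|s - t|]mulrC -mulrA [X in _ <= X]mulrC ler_wpM2l //.
rewrite mulrDl addrC lerD2l mulrAC ler_pdivrMr // ler_pM2l //; lra.
Qed.


End MVI.



Section Solve.
Context {R : realType}.

Lemma normed_cvg_rV m (u_ : nat -> 'rV[R]_m) :
  cvgn [normed series u_] -> cvgn (series u_).
Proof.
move=> /cauchy_cvgP/cauchy_seriesP u_ncvg.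
apply/cauchy_cvgP/cauchy_seriesP => e /u_ncvg.
apply: filterS => n /=; rewrite ger0_norm ?sumr_ge0//.
by apply: le_lt_trans; apply: ler_norm_sum.
Qed.

Lemma geo_cvg m (u : nat -> 'rV[R]_m) (e0 : R) :
  (forall k, `|u k| <= e0 * (2^-1) ^+ k) -> cvgn (series u).
Proof.
move=> H; apply: normed_cvg_rV.
apply: (@series_le_cvg _ _ (geometric e0 (2^-1))).
- by move=> k /=; exact: normr_ge0.
- move=> k /=; apply: mulr_ge0; last by rewrite exprn_ge0.
  by have := H 0%N; rewrite expr0 mulr1; apply: le_trans.
- move=> k; exact: H.
- apply: is_cvg_geometric_series.
  by rewrite ger0_norm ?invr_ge0 // invf_lt1 // ltr1n.
Qed.

Lemma cvg_seqP m (u : nat -> 'rV[R]_m) (l : 'rV[R]_m) :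
  u @ \oo --> l -> forall e : R, 0 < e -> exists N, forall k, (N <= k)%N -> `|l - u k| < e.
Proof. move=> /cvgrPdist_lt H e e0. have [N _ HN] := H e e0. by exists N. Qed.

Lemma ball_seg {n} (xh a b : 'rV[R]_n) r : enorm (a - xh) <= r -> enorm (b - xh) <= r ->
  forall t, 0 <= t -> t <= 1 -> enorm (b + t *: (a - b) - xh) <= r.
Proof.
move=> ha hb t t0 t1.
have -> : b + t *: (a - b) - xh = t *: (a - xh) + (1 - t) *: (b - xh).
  by apply/rowP => j; rewrite !mxE; ring.
apply: le_trans; first exact: enormD.
rewrite !enormZ !ger0_norm ?subr_ge0 //.
have h1 := ler_wpM2l t0 ha.
have t1' : 0 <= 1 - t by rewrite subr_ge0.
have h2 := ler_wpM2l t1' hb.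
lra.
Qed.

Lemma aux1 (a e C : R) : 0 <= a -> 0 < e -> 0 < C -> a * (e / ((a + 1) * C)) <= e / C.
Proof.
move=> a0 e0 C0.
have a1 : a + 1 != 0 by rewrite gt_eqF // ltr_wpDl.
have -> : a * (e / ((a + 1) * C)) = (a / (a + 1)) * (e / C).
  by field; rewrite a1 gt_eqF.
rewrite -[X in _ <= X]mul1r; apply: ler_wpM2r; first by rewrite divr_ge0 ?ltW.
by rewrite ler_pdivrMr ?ltr_wpDl //; lra.
Qed.

Lemma solve {n m} (Xi : 'rV[R]_n -> 'rV[R]_m) (J : 'rV[R]_n -> 'M[R]_(n,m))
  (A : 'M[R]_(n,m)) (B : 'M[R]_(m,n)) (xh : 'rV[R]_n) (r0 eta cB cA : R) :
  0 < r0 -> 0 <= eta -> 0 < cB -> 0 < cA -> eta * cB <= 2^-1 ->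
  B *m A = 1%:M ->
  (forall v, enorm (v *m B) <= cB * enorm v) ->
  (forall h, enorm (h *m A) <= cA * enorm h) ->
  (forall z, enorm (z - xh) <= r0 -> has_deriv_at Xi (J z) z) ->
  (forall z h, enorm (z - xh) <= r0 -> enorm (h *m (J z - A)) <= eta * enorm h) ->
  forall z w, enorm (z - xh) <= r0 / 2 -> 2 * cB * enorm (w - Xi z) <= r0 / 2 ->
  exists d, Xi d = w /\ enorm (d - z) <= 2 * cB * enorm (w - Xi z).
Proof.
move=> r00 eta0 cB0 cA0 etacB BA HB HA Hd HJ z w zx wz.
pose S := [set y : 'rV[R]_n | enorm (y - xh) <= r0].
have mv : forall a b, S a -> S b ->
    enorm (Xi a - Xi b - (a - b) *m A) <= eta * enorm (a - b).
  move=> a b Sa Sb; apply: (@mvi _ _ _ Xi J A S) => //. all: try (by move=> t t0 t1; exact: ball_seg). all: try (by move=> y Sy; exact: Hd). all: try (by move=> y h Sy; exact: HJ).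
have lip : forall a b, S a -> S b -> enorm (Xi a - Xi b) <= (eta + cA) * enorm (a - b).
  move=> a b Sa Sb.
  have -> : Xi a - Xi b = (Xi a - Xi b - (a - b) *m A) + (a - b) *m A by rewrite subrK.
  apply: le_trans; first exact: enormD.
  by rewrite mulrDl lerD ?mv ?HA.
set e0 := enorm (w - Xi z).
have e00 : 0 <= e0 by exact: enorm_ge0.
have wz' : 2 * cB * e0 <= r0 / 2 by exact: wz.
have inS : forall v, enorm v <= 2 * e0 -> S (z + v *m B).
  move=> v hv; rewrite /S /= (_ : z + v *m B - xh = (z - xh) + v *m B); last first.
    by rewrite addrAC.
  apply: le_trans; first exact: enormD.
  have := HB v; have := ler_wpM2l (ltW cB0) hv; lra.
pose Phi v := v + (w - Xi (z + v *m B)).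
pose vs k := iter k Phi 0.
pose es k := w - Xi (z + vs k *m B).
have vsS : forall k, vs k.+1 = vs k + es k by [].
pose q : R := 2^-1.
have q0 : 0 <= q by rewrite /q invr_ge0.
have inv : forall k, enorm (vs k) <= 2 * e0 * (1 - q ^+ k) /\ enorm (es k) <= q ^+ k * e0.
  elim=> [|k [IH1 IH2]].
    by rewrite /es /= mul0mx addr0 expr0 subrr mulr0 mul1r enorm0 lexx.
  have qk0 : 0 <= q ^+ k by rewrite exprn_ge0.
  have qS : q ^+ k.+1 = q ^+ k * 2^-1 by rewrite exprSr.
  have IH1' : enorm (vs k) <= 2 * e0 by move: IH1; nra.
  split.
    rewrite vsS; apply: le_trans; first exact: enormD.
    rewrite qS; nra.
  set d0 := z + vs k *m B; set d1 := z + vs k.+1 *m B.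
  have S0 : S d0 by exact: inS.
  have dd : d1 - d0 = es k *m B.
    rewrite /d1 /d0 vsS mulmxDl; set a := vs k *m B; set b := es k *m B; apply/rowP => j; rewrite !mxE; ring.
  have S1 : S d1.
    apply: inS; rewrite vsS; apply: le_trans; first exact: enormD.
    nra.
  have ee : es k.+1 = - (Xi d1 - Xi d0 - (d1 - d0) *m A).
    rewrite dd -mulmxA BA mulmx1 /es -/d1 -/d0.
    rewrite opprB; rewrite /es -/d0; apply/rowP => j; rewrite !mxE; ring.
  rewrite ee enormN; apply: le_trans; first exact: mv.
  rewrite dd; apply: le_trans; first exact: (ler_wpM2l eta0 (HB _)).
  rewrite qS mulrA.
  have := ler_wpM2l (mulr_ge0 eta0 (ltW cB0)) IH2.
  have := enorm_ge0 (es k).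
  nra.
have vser : forall k, vs k = series es k.
  elim=> [|k IH]; first by rewrite /series /= big_geq.
  by rewrite vsS seriesSr IH.
have cv : cvgn (series es).
  apply: (@geo_cvg _ _ e0) => k; apply: le_trans; first exact: mxnorm_le_enorm.
  by rewrite mulrC; case: (inv k).
set vst := limn (series es).
have conv : vs @ \oo --> vst.
  by rewrite (_ : vs = series es) //; apply: funext => k; exact: vser.
have Hc := cvg_seqP _ _ _ conv.
have vb : forall k, enorm (vs k) <= 2 * e0.
  move=> k; case: (inv k) => h _; have : 0 <= q ^+ k by rewrite exprn_ge0.
  have : q ^+ k <= 1 by rewrite exprn_ile1 // /q invf_le1 // ler1n.
  nra.
have dist : forall k, enorm (vs k - vst) <= m%:R * `|vst - vs k|.
  by move=> k; rewrite enormB; exact: enorm_le_mxnorm.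
have vstb : enorm vst <= 2 * e0.
  apply/ler_addgt0Pr => e e0p.
  have [N HN] := Hc (e / (m%:R + 1)) ltac:(by rewrite divr_gt0 // ltr_wpDl).
  have h1 := HN N (leqnn N); have h2 := dist N; have h3 := vb N.
  have h4 : m%:R * `|vst - vs N| <= e.
    apply: le_trans (ler_wpM2l (ler0n _ m) (ltW h1)) _.
    rewrite mulrA ler_pdivrMr ?ltr_wpDl //; lra.
  have := enormDB vst (vs N) 0; rewrite !subr0; rewrite enormB in h2; lra.
exists (z + vst *m B); split; last first.
  rewrite addrAC subrr add0r; apply: le_trans; first exact: HB.
  have := ler_wpM2l (ltW cB0) vstb; lra.
set d := z + vst *m B.
have Sd : S d by exact: inS.
apply/eqP; rewrite eq_sym -subr_eq0; apply/eqP/enorm_eq0.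
apply/le_anti; rewrite enorm_ge0 andbT.
apply/ler_addgt0Pr => e e0p; rewrite add0r.
set C := 2 + (eta + cA) * cB.
have eAB : 0 <= (eta + cA) * cB by rewrite mulr_ge0 // ?addr_ge0 // ltW.
have C0 : 0 < C by rewrite /C; lra.
have [N HN] := Hc (e / ((m%:R + 1) * C)) ltac:(by rewrite divr_gt0 // mulr_gt0 // ltr_wpDl).
have a1 : enorm (vs N - vst) <= e / C.
  apply: le_trans (dist N) _; apply: le_trans (ler_wpM2l (ler0n _ m) (ltW (HN N (leqnn N)))) _.
  exact: aux1.
have a2 : enorm (vs N.+1 - vst) <= e / C.
  apply: le_trans (dist N.+1) _; apply: le_trans (ler_wpM2l (ler0n _ m) (ltW (HN N.+1 (leqnSn N)))) _.
  exact: aux1.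
have SN : S (z + vs N *m B) by exact: inS.
have a3 : enorm (es N) <= enorm (vs N.+1 - vst) + enorm (vs N - vst).
  have -> : es N = vs N.+1 - vs N by rewrite vsS addrAC subrr add0r.
  by apply: le_trans (enormDB _ vst _) _; rewrite (enormB vst).
have a4 : enorm (Xi (z + vs N *m B) - Xi d) <= (eta + cA) * (cB * enorm (vs N - vst)).
  apply: le_trans (lip _ _ SN Sd) _; apply: ler_wpM2l; first exact: (addr_ge0 eta0 (ltW cA0)).
  have -> : z + vs N *m B - d = (vs N - vst) *m B.
    rewrite /d mulmxBl; set a := vs N *m B; set b := vst *m B.
    by apply/rowP => j; rewrite !mxE; ring.
  exact: HB.
have a5 : enorm (w - Xi d) <= enorm (es N) + enorm (Xi (z + vs N *m B) - Xi d).
  by rewrite /es; apply: enormDB.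
have a6 : (eta + cA) * (cB * enorm (vs N - vst)) <= (eta + cA) * cB * (e / C).
  rewrite -mulrA; apply: ler_wpM2l; first exact: (addr_ge0 eta0 (ltW cA0)).
  by apply: ler_wpM2l; [exact: ltW | exact: a1].
have a7 : e / C + e / C + (eta + cA) * cB * (e / C) = e.
  have Cn : C != 0 by rewrite gt_eqF.
  by move: Cn; rewrite /C => Cn; field.
lra.
Qed.


End Solve.



Section Main.
Context {R : realType}.

Lemma cvx_seg n (D : set 'rV[R]_n) : convex_set D ->
  forall a b t, D a -> D b -> 0 <= t -> t <= 1 -> D (t *: a + (1 - t) *: b).
Proof.
move=> cD a b t Da Db t0 t1.
have := cD a b (Itv01 t0 t1) (mem_set Da) (mem_set Db).
by rewrite in_setE.
Qed.

Lemma inj_unit m (N : 'M[R]_m) :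
  (forall v : 'rV[R]_m, v *m N = 0 -> v = 0) -> N \in unitmx.
Proof.
move=> H; rewrite -row_free_unit -kermx_eq0; apply/eqP/row_matrixP => i.
by rewrite row0; apply: H; rewrite -row_mul mulmx_ker row0.
Qed.

Lemma le0_of_eps (a C : R) : (forall e, 0 < e -> a <= e * C) -> a <= 0.
Proof.
move=> H; apply/ler_addgt0Pr => e e0; rewrite add0r.
have C1 : 0 < `|C| + 1 by rewrite ltr_wpDl.
have := H (e / (`|C| + 1)) (divr_gt0 e0 C1).
move=> h; apply: le_trans h _.
apply: (le_trans (y := e / (`|C| + 1) * (`|C| + 1))); last by rewrite divfK ?gt_eqF.
apply: ler_wpM2l; first by rewrite divr_ge0 ?ltW.
have : C <= `|C| by exact: ler_norm.
lra.
Qed.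

Lemma L2 {n m} (D : set 'rV[R]_n) (K : set 'rV[R]_m) (Xi : 'rV[R]_n -> 'rV[R]_m)
  (A : 'M[R]_(n, m)) (xh : 'rV[R]_n) (rho : R) (lam : 'rV[R]_m) :
  0 < rho -> convex_set D -> D xh -> Xi xh = 0 -> has_deriv_at Xi A xh ->
  D `&` eball xh rho = [set x | K (Xi x)] `&` eball xh rho ->
  (forall k, K k -> dotv lam k <= 0) -> normal_cone D xh (lam *m A^T).
Proof.
move=> rho0 cD Dxh Xi0 Hd Hset Hlam; split => // u Du.
rewrite dotv_mulmx trmxK; set p := u - xh.
apply: (@le0_of_eps _ (enorm lam * enorm p)) => e e0.
have [p0|pn0] := eqVneq (enorm p) 0.
  by rewrite (enorm_eq0 _ p0) mul0mx dotv0r; apply: mulr_ge0; [exact: ltW | apply: mulr_ge0; exact: enorm_ge0].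
have pp : 0 < enorm p by rewrite lt_neqAle eq_sym pn0 enorm_ge0.
have [d [d0 Hdd]] := Hd e e0.
pose t := Num.min 1 (Num.min (d / (2 * enorm p)) (rho / enorm p)).
have t0 : 0 < t by rewrite /t !lt_min ltr01 !divr_gt0 // mulr_gt0.
have t1 : t <= 1 by rewrite /t ge_min lexx.
have td : t * enorm p < d.
  have : t <= d / (2 * enorm p) by rewrite /t !ge_min lexx orbT.
  move=> H; have := ler_wpM2r (ltW pp) H.
  have -> : d / (2 * enorm p) * enorm p = d / 2.
    by field; rewrite gt_eqF.
  lra.
have trho : t * enorm p <= rho.
  have : t <= rho / enorm p by rewrite /t !ge_min lexx !orbT.
  by rewrite -(ler_pM2r pp) divfK ?gt_eqF.
have ut : t *: u + (1 - t) *: xh = xh + t *: p.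
  by rewrite /p; apply/rowP => j; rewrite !mxE; ring.
have Dut : D (xh + t *: p).
  rewrite -ut; apply: cvx_seg => //; first exact: ltW.
have Bt : eball xh rho (xh + t *: p).
  by rewrite /eball /= addrAC subrr add0r enormZ gtr0_norm.
have : (D `&` eball xh rho) (xh + t *: p) by split.
rewrite Hset => -[KX _]; have := Hlam _ KX.
have := Hdd (t *: p); rewrite enormZ gtr0_norm // => /(_ td).
rewrite Xi0 subr0 -scalemxAl.
set r := Xi (xh + t *: p) - t *: (p *m A) => hr.
have -> : Xi (xh + t *: p) = t *: (p *m A) + r by rewrite /r addrCA subrr addr0.
rewrite dotvDr dotvZr => h1.
have h2 : - dotv lam r <= enorm lam * (e * (t * enorm p)).
  rewrite -dotvNr; apply: le_trans; first exact: dotv_le.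
  by rewrite enormN ler_wpM2l // enorm_ge0.
have : t * dotv lam (p *m A) <= t * (e * (enorm lam * enorm p)).
  have -> : t * (e * (enorm lam * enorm p)) = enorm lam * (e * (t * enorm p)).
    by ring.
  lra.
by rewrite ler_pM2l // mulrC.
Qed.

Lemma feas {n m} (D : set 'rV[R]_n) (K : set 'rV[R]_m) (Xi : 'rV[R]_n -> 'rV[R]_m)
  (J : 'rV[R]_n -> 'M[R]_(n,m)) (A : 'M[R]_(n,m)) (B : 'M[R]_(m,n)) (xh : 'rV[R]_n)
  (rho r0 eta cB cA : R) :
  0 < r0 -> r0 <= rho -> 0 <= eta -> 0 < cB -> 0 < cA -> eta * cB <= 2^-1 ->
  B *m A = 1%:M ->
  (forall v, enorm (v *m B) <= cB * enorm v) ->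
  (forall h, enorm (h *m A) <= cA * enorm h) ->
  (forall z, enorm (z - xh) <= r0 -> has_deriv_at Xi (J z) z) ->
  (forall z h, enorm (z - xh) <= r0 -> enorm (h *m (J z - A)) <= eta * enorm h) ->
  D `&` eball xh rho = [set x | K (Xi x)] `&` eball xh rho ->
  (forall a b, K a -> K b -> K (a + b)) ->
  (forall t u, 0 <= t -> K u -> K (t *: u)) ->
  forall x y h, enorm (x - xh) <= r0 / 4 -> normal_cone D x y -> K (h *m J x) ->
  dotv y h <= 0.
Proof.
move=> r00 r0rho eta0 cB0 cA0 etacB BA HB HA Hd HJ Hset Kadd Kscale x y h xx [Dx Ny] Kh.
have xr0 : enorm (x - xh) <= r0 by lra.
have KXx : K (Xi x).
  have : (D `&` eball xh rho) x by split => //; rewrite /eball /=; lra.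
  by rewrite Hset => -[].
have [h0|hn0] := eqVneq (enorm h) 0.
  by rewrite (enorm_eq0 _ h0) dotv0r.
have hp : 0 < enorm h by rewrite lt_neqAle eq_sym hn0 enorm_ge0.
apply: (@le0_of_eps _ (2 * cB * enorm y * enorm h)) => e e0.
pose ep := Num.min e (4 * cB)^-1.
have ep0 : 0 < ep by rewrite /ep lt_min e0 invr_gt0 mulr_gt0.
have epe : ep <= e by rewrite /ep ge_min lexx.
have epc : ep <= (4 * cB)^-1 by rewrite /ep ge_min lexx orbT.
have [d [d0 Hdd]] := Hd x xr0 ep ep0.
pose t := Num.min 1 (Num.min (d / (2 * enorm h)) (r0 / (4 * enorm h))).
have t0 : 0 < t by rewrite /t !lt_min ltr01 !divr_gt0 // mulr_gt0.
have td : t * enorm h < d.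
  have : t <= d / (2 * enorm h) by rewrite /t !ge_min lexx orbT.
  move=> H; have := ler_wpM2r (ltW hp) H.
  have -> : d / (2 * enorm h) * enorm h = d / 2 by field; rewrite gt_eqF.
  lra.
have tr : t * enorm h <= r0 / 4.
  have : t <= r0 / (4 * enorm h) by rewrite /t !ge_min lexx !orbT.
  move=> H; have := ler_wpM2r (ltW hp) H.
  by have -> : r0 / (4 * enorm h) * enorm h = r0 / 4 by field; rewrite gt_eqF.
set z := x + t *: h.
set w := Xi x + t *: (h *m J x).
have Kw : K w by apply: Kadd => //; apply: Kscale => //; exact: ltW.
have zx : enorm (z - xh) <= r0 / 2.
  rewrite /z addrAC; apply: le_trans; first exact: enormD.
  rewrite enormZ gtr0_norm //; lra.
have he : enorm (w - Xi z) <= ep * (t * enorm h).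
  have := Hdd (t *: h); rewrite enormZ gtr0_norm // => /(_ td).
  rewrite -scalemxAl -/z => H; rewrite -enormN.
  have -> : - (w - Xi z) = Xi z - Xi x - t *: (h *m J x).
    by rewrite /w; set a := h *m J x; apply/rowP => j; rewrite !mxE; ring.
  exact: H.
have two0 : (0:R) < 2 by lra.
have e0b : 2 * cB * enorm (w - Xi z) <= r0 / 2.
  have := ler_wpM2l (ltW (mulr_gt0 two0 cB0)) he.
  have q1 : 2 * cB * ep <= 2^-1.
    have := ler_wpM2l (ltW (mulr_gt0 two0 cB0)) epc.
    by have -> : 2 * cB * (4 * cB)^-1 = 2^-1 by field; rewrite gt_eqF.
  have := ler_wpM2r (mulr_ge0 (ltW t0) (enorm_ge0 h)) q1.
  rewrite -mulrA.
  lra.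
have [dd [Xdd ddz]] := solve _ _ _ _ _ _ _ _ _ r00 eta0 cB0 cA0 etacB BA HB HA Hd HJ _ _ zx e0b.
have ddx : enorm (dd - xh) <= rho.
  have := enormDB dd z xh; lra.
have Ddd : D dd.
  have : ([set x | K (Xi x)] `&` eball xh rho) dd by split; rewrite /= ?Xdd.
  by rewrite -Hset => -[].
have := Ny dd Ddd.
have -> : dd - x = t *: h + (dd - z).
  by rewrite /z; apply/rowP => j; rewrite !mxE; ring.
rewrite dotvDr dotvZr => h1.
have h2 : - dotv y (dd - z) <= enorm y * enorm (dd - z).
  by rewrite -dotvNr -(enormN (dd - z)); apply: dotv_le.
have h3 : enorm y * enorm (dd - z) <= enorm y * (2 * cB * (ep * (t * enorm h))).
  apply: ler_wpM2l; first exact: enorm_ge0.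
  apply: le_trans ddz _; apply: ler_wpM2l; first by rewrite mulr_ge0 // ltW.
  exact: he.
have : t * dotv y h <= t * (ep * (2 * cB * enorm y * enorm h)).
  have -> : t * (ep * (2 * cB * enorm y * enorm h)) = enorm y * (2 * cB * (ep * (t * enorm h))) by ring.
  lra.
rewrite ler_pM2l // => h4; apply: le_trans h4 _; apply: ler_wpM2r => //.
by rewrite !mulr_ge0 ?enorm_ge0 // ltW.
Qed.

End Main.



Theorem lemma4p2 (R : realType) (n : nat) (alpha : R) (D : set 'rV[R]_n)
  (xh yh : 'rV[R]_n) :
  0 < alpha -> alpha <= 1 ->
  closed D -> convex_set D -> D xh ->
  C1alpha_cone_reducible_at alpha D xh ->
  normal_cone D xh yh ->
  exists rhoh deltah kappah : R, 0 < rhoh /\ 0 < deltah /\ 0 < kappah /\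
    forall x : 'rV[R]_n, eball xh rhoh x ->
      forall y : 'rV[R]_n, normal_cone D x y -> eball yh deltah y ->
        exists u w : 'rV[R]_n, normal_cone D xh u /\ eball 0 1 w /\
          y = u + (kappah * enorm (x - xh) `^ alpha) *: w.
Proof.
move=> a0 a1 clD cD Dxh
  [rho [m [K [Xi [DXi [rho0 [[Kcl [Kcvx [K0 [Kscale Kpt]]]] [Xi0 [Hder [Hcont [Hsurj [[L HL] Hset]]]]]]]]]]]] Nyh.
set A := DXi xh.
have [f Hf] := boolp.choice (fun i : 'I_m => Hsurj (delta_mx 0 i)).
pose B : 'M[R]_(m, n) := \matrix_(i < m) f i.
have BA : B *m A = 1%:M.
  by apply/row_matrixP => i; rewrite row_mul rowK Hf row1.
have Kadd : forall a b, K a -> K b -> K (a + b).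
  move=> a b Ka Kb.
  have h0 : (0 : R) <= 2^-1 by rewrite invr_ge0.
  have h1 : (2^-1 : R) <= 1 by rewrite invf_le1 ?ler1n.
  have := @cvx_seg _ _ _ Kcvx a b (2^-1) Ka Kb h0 h1.
  move=> /(Kscale 2 _ ltac:(by [])).
  have -> : 2 *: (2^-1 *: a + (1 - 2^-1) *: b) = a + b.
    by apply/rowP => j; rewrite !mxE; field.
  done.
have [cB [cB0 HB]] := opbound B.
have [cA [cA0 HA]] := opbound A.
have [cBT [cBT0 HBT]] := opbound B^T.
pose L1 := `|L| + 1.
have L10 : 0 < L1 by rewrite /L1 ltr_wpDl.
have HH : forall z h, enorm (z - xh) <= rho ->
    enorm (h *m (DXi z - A)) <= L1 * enorm (z - xh) `^ alpha * enorm h.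
  move=> z h zr.
  have := HL z xh zr ltac:(by rewrite /eball /= subrr enorm0 ltW) h.
  move=> H; apply: le_trans H _; rewrite -!mulrA; apply: ler_wpM2r.
    by rewrite mulr_ge0 ?powR_ge0 ?enorm_ge0.
  by rewrite /L1; have := ler_norm L; lra.
pose s0 := (2 * L1 * cB)^-1.
have s00 : 0 < s0 by rewrite /s0 invr_gt0 !mulr_gt0.
pose r0 := Num.min rho (s0 `^ (alpha^-1)).
have r00 : 0 < r0 by rewrite /r0 lt_min rho0 powR_gt0.
have r0rho : r0 <= rho by rewrite /r0 ge_min lexx.
have r0s : r0 `^ alpha <= s0.
  have : r0 <= s0 `^ (alpha^-1) by rewrite /r0 ge_min lexx orbT.
  move=> H.
  have := @ge0_ler_powR _ alpha (ltW a0) r0 (s0 `^ alpha^-1) ltac:(by rewrite nnegrE ltW) ltac:(by rewrite nnegrE powR_ge0) H.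
  by rewrite -powRrM mulVf ?gt_eqF // powRr1 // ltW.
pose eta := L1 * r0 `^ alpha.
have eta0 : 0 <= eta by rewrite mulr_ge0 ?powR_ge0 // ltW.
have etacB : eta * cB <= 2^-1.
  have := ler_wpM2l (ltW L10) r0s => H.
  have := ler_wpM2r (ltW cB0) H.
  by have -> : L1 * s0 * cB = 2^-1 by rewrite /s0; field; rewrite !gt_eqF.
have HJ : forall z h, enorm (z - xh) <= r0 -> enorm (h *m (DXi z - A)) <= eta * enorm h.
  move=> z h zr; apply: le_trans (HH z h (le_trans zr r0rho)) _.
  apply: ler_wpM2r; first exact: enorm_ge0.
  apply: ler_wpM2l; first exact: ltW.
  have hz : enorm (z - xh) \in Num.nneg by rewrite nnegrE enorm_ge0.
  have hr : r0 \in Num.nneg by rewrite nnegrE ltW.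
  exact: (@ge0_ler_powR _ alpha (ltW a0) _ _ hz hr zr).
have Hd : forall z, enorm (z - xh) <= r0 -> has_deriv_at Xi (DXi z) z.
  by move=> z zr; apply: Hder; rewrite /eball /=; apply: le_trans zr r0rho.
have HdA : has_deriv_at Xi A xh by apply: Hder; rewrite /eball /= subrr enorm0 ltW.
pose kappa := 2 * cBT * (enorm yh + 1) * L1 + 1.
have kappa0 : 0 < kappa.
  rewrite /kappa; have : 0 <= 2 * cBT * (enorm yh + 1) * L1.
    apply: mulr_ge0; last exact: ltW. apply: mulr_ge0; first by apply: mulr_ge0 => //; exact: ltW.
    by apply: addr_ge0 => //; exact: enorm_ge0.
  lra.
exists (r0 / 4), 1, kappa; split; first by rewrite divr_gt0.
split; first exact: ltr01.
split; first exact: kappa0.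
move=> x xb y Nxy yb.
have xx : enorm (x - xh) <= r0 / 4 by exact: xb.
have xr : enorm (x - xh) <= r0 by lra.
set M := DXi x.
have F : forall h, K (h *m M) -> dotv y h <= 0.
  move=> h Kh.
  exact: (feas _ _ _ _ _ _ _ _ _ _ _ _ r00 r0rho eta0 cB0 cA0 etacB BA HB HA Hd HJ Hset Kadd Kscale _ _ _ xx Nxy Kh).
pose E := B *m (M - A).
have HE : forall k, enorm (k *m E) <= (eta * cB) * enorm k.
  move=> k; rewrite /E mulmxA; apply: le_trans (HJ x _ xr) _.
  rewrite -mulrA; apply: ler_wpM2l => //; exact: HB.
have etacB0 : 0 <= eta * cB by rewrite mulr_ge0 // ltW.
pose BM := B *m M.
have BME : BM = 1%:M + E by rewrite /BM /E mulmxBr BA addrC subrK.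
have BMu : BM \in unitmx.
  apply: inj_unit => v; rewrite BME mulmxDr mulmx1 => /eqP; rewrite addr_eq0 => /eqP vE.
  apply: enorm_eq0; apply/le_anti; rewrite enorm_ge0 andbT.
  have := HE v; rewrite -(enormN (v *m E)) -vE => H.
  have := ler_wpM2r (enorm_ge0 v) etacB; have := enorm_ge0 v; lra.
pose C := invmx BM *m B.
have CM : C *m M = 1%:M by rewrite /C -mulmxA -/BM mulVmx.
pose lam := y *m C^T.
have Claim1 : forall h, dotv y h = dotv y (h *m M *m C).
  move=> h; set g := h - h *m M *m C.
  have gM : g *m M = 0 by rewrite /g mulmxBl -(mulmxA (h *m M) C M) CM mulmx1 subrr.
  have h1 := F g ltac:(by rewrite gM).
  have h2 := F (- g) ltac:(by rewrite mulNmx gM oppr0).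
  rewrite dotvNr in h2.
  have : dotv y g = 0 by lra.
  by rewrite /g dotvBr => /eqP; rewrite subr_eq0 => /eqP.
have Claim2 : lam *m M^T = y.
  set v := lam *m M^T - y.
  have Hv : forall h, dotv v h = 0.
    move=> h; rewrite /v dotvBl dotv_mulmx trmxK /lam dotv_mulmx trmxK -Claim1.
    by rewrite subrr.
  by apply/eqP; rewrite -subr_eq0; apply/eqP/dotv_eq0; rewrite Hv.
have Claim3 : forall k, K k -> dotv lam k <= 0.
  move=> k Kk; rewrite /lam dotv_mulmx trmxK; apply: F.
  by rewrite -mulmxA CM mulmx1.
pose u := lam *m A^T.
have Nu : normal_cone D xh u.
  exact: (L2 _ _ _ _ _ _ _ rho0 cD Dxh Xi0 HdA Hset Claim3).
have lamb : enorm lam <= 2 * cBT * enorm y.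
  have e1 : lam + lam *m E^T = y *m B^T.
    by rewrite -{1}(mulmx1 lam) -mulmxDr -trmx1 -linearD /= -BME /BM trmx_mul mulmxA Claim2.
  have e2 : lam = y *m B^T - lam *m E^T by rewrite -e1 addrK.
  have h1 : enorm lam <= cBT * enorm y + (eta * cB) * enorm lam.
    rewrite {1}e2; apply: le_trans; first exact: enormD.
    apply: lerD; first exact: HBT.
    by rewrite enormN; apply: optrans.
  have := ler_wpM2r (enorm_ge0 lam) etacB; lra.
set P := enorm (x - xh) `^ alpha.
have P0 : 0 <= P by exact: powR_ge0.
have yu : y - u = lam *m (M - A)^T.
  by rewrite /u -{1}Claim2 -mulmxBr; congr (_ *m _); apply/matrixP => i j; rewrite !mxE.
have yub : enorm (y - u) <= (L1 * P) * enorm lam.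
  rewrite yu; apply: optrans; first by rewrite mulr_ge0 // ltW.
  by move=> k; exact: HH x k (le_trans xr r0rho).
have yn : enorm y <= enorm yh + 1.
  have := enormDB y yh 0; rewrite !subr0; have : enorm (y - yh) <= 1 by exact: yb.
  lra.
have yuk : enorm (y - u) <= kappa * P.
  apply: le_trans yub _.
  have h1 := ler_wpM2l (mulr_ge0 (ltW L10) P0) lamb.
  have h2 := ler_wpM2l (mulr_ge0 (mulr_ge0 (ltW L10) P0) (mulr_ge0 (ltW (ltr0Sn _ 1)) (ltW cBT0))) yn.
  apply: le_trans h1 _.
  have -> : L1 * P * (2 * cBT * enorm y) = (L1 * P * (2 * cBT)) * enorm y by ring.
  apply: le_trans h2 _.
  rewrite /kappa; have : 0 <= P by []; nra.
have [s0'|sn0] := eqVneq (kappa * P) 0.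
  exists u, 0; split => //; split; first by rewrite /eball /= subrr enorm0 ler01.
  rewrite scaler0 addr0; apply/eqP; rewrite -subr_eq0; apply/eqP/enorm_eq0.
  by apply/le_anti; rewrite enorm_ge0 andbT -s0'.
have sp : 0 < kappa * P by rewrite lt_neqAle eq_sym sn0 mulr_ge0 // ltW.
exists u, ((kappa * P)^-1 *: (y - u)); split => //; split.
  rewrite /eball /= subr0 enormZ ger0_norm; last by rewrite invr_ge0 ltW.
  by rewrite mulrC ler_pdivrMr // mul1r.
by rewrite scalerA mulfV // scale1r addrC subrK.
Qed.
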